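(* Let $\alpha,\beta$ be reals with $2>\alpha>\beta\geq1$ and let $\ell_0=\ell_0(\alpha,\beta)$. Let $\mathcal{F}$ be a family of bipartite graphs such that there are constants $\rho>0$ and $C$ with $z(m,n,\mathcal{F})\leq \rho m n^{\alpha-1}+Cn^{\beta}$ for all positive integers $m\leq n$. For every real $\delta>0$ there is a real $\mu'>0$ depending only on $\alpha,\beta,\rho,\delta$ such that for all sufficiently large $n$ the following holds. Let $G$ be an $\mathcal{F}$-free bipartite graph with at most $n$ vertices and minimum degree at least $\delta n^{\alpha-1}$, and let $u\in V(G)$. Then there exist a set $S\subseteq V(G)$ with $|S|\geq \mu' n$ and a family $\mathcal{P}=\{P_v: v\in S\}$, where each $P_v$ is a path from $u$ to $v$ of length at most $\ell_0$, such that no vertex other than $u$ lies on more than $n/\log n$ of the paths in $\mathcal{P}$.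
   Context: $z(m,n,\mathcal{F})$ is the maximum number of edges in an $\mathcal{F}$-free bipartite graph with parts of sizes $m$ and $n$ ($\mathcal{F}$-free: containing no member of $\mathcal{F}$ as a subgraph). For reals $2>\alpha>\beta\geq1$, define $\ell_0(\alpha,\beta)=\left\lfloor \log_{\beta}\frac{(2-\beta)(\alpha-1)}{\alpha-\beta}\right\rfloor+2$ if $\beta>1$, and $\ell_0(\alpha,\beta)=\lfloor 1/(\alpha-1)\rfloor+1$ if $\beta=1$. *)

(* Defs.v *)
From Stdlib Require Import Reals ZArith ClassicalEpsilon.
From mathcomp Require Import all_boot.
Set Implicit Arguments. Unset Strict Implicit. Unset Printing Implicit Defensive.

Definition simple_graph (V : finType) (G : rel V) : Prop :=
  (forall x y, G x y = G y x) /\ (forall x, G x x = false).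

Definition bipartite_graph (V : finType) (G : rel V) : Prop :=
  simple_graph G /\ exists c : V -> bool, forall x y, G x y -> c x != c y.

Definition graph_family := forall k : nat, rel 'I_k -> Prop.

Definition subgraph_of (k : nat) (H : rel 'I_k) (V : finType) (G : rel V) : Prop :=
  exists f : 'I_k -> V, injective f /\ forall x y, H x y -> G (f x) (f y).

Definition F_free (F : graph_family) (V : finType) (G : rel V) : Prop :=
  ~ exists k (H : rel 'I_k), F k H /\ subgraph_of H G.

Definition bip_graph (m n : nat) (E : {set 'I_m * 'I_n}) : rel ('I_m + 'I_n) :=
  fun x y => match x, y with
             | inl i, inr j => (i, j) \in E
             | inr j, inl i => (i, j) \in E
             | _, _ => false
             end.

Definition pbool (P : Prop) : bool :=
  if excluded_middle_informative P then true else false.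

Definition zarank (m n : nat) (F : graph_family) : nat :=
  \max_(E : {set 'I_m * 'I_n} | pbool (F_free F (bip_graph E))) #|E|.

Definition Rfloor (x : R) : Z := (up x - 1)%Z.

Definition ell0 (alpha beta : R) : Z :=
  if Rlt_dec 1 beta then
    (Rfloor (ln ((2 - beta) * (alpha - 1) / (alpha - beta)) / ln beta) + 2)%Z
  else (Rfloor (1 / (alpha - 1)) + 1)%Z.

(* p is a path in G from u to v (vertex list u :: p, no repeated vertices);
   its length (number of edges) is size p. *)
Definition is_path_from_to (V : finType) (G : rel V) (u v : V) (p : seq V) : Prop :=
  path G u p /\ last u p = v /\ uniq (u :: p).

(* Main.v *)
Require Import Defs.
From Stdlib Require Import Reals ZArith.
From mathcomp Require Import all_boot.
From Stdlib Require Import Lra Lia Psatz ClassicalEpsilon.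
From mathcomp Require Import zify.
Local Open Scope R_scope.

Lemma Rfloor_spec x : IZR (Rfloor x) <= x < IZR (Rfloor x) + 1.
Proof. unfold Rfloor. rewrite minus_IZR. destruct (archimed x). simpl. lra. Qed.

Lemma Rfloor_nonneg x : 0 <= x -> (0 <= Rfloor x)%Z.
Proof.
  intro H. destruct (Rfloor_spec x) as [_ H2].
  assert (-1 < IZR (Rfloor x)) by lra.
  apply lt_IZR in H0. lia.
Qed.

Lemma INR_Z2N z : (0 <= z)%Z -> INR (Z.to_nat z) = IZR z.
Proof. intro H. rewrite INR_IZR_INZ Z2Nat.id //. Qed.

Lemma div_ge1 a b : 0 < b -> b <= a -> 1 <= a / b.
Proof.
  intros Hb Hab. apply (Rmult_le_reg_r b); [lra|].
  unfold Rdiv. rewrite Rmult_assoc Rinv_l; lra.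
Qed.

Definition exps_spec (alpha beta : R) (k : nat) (e : nat -> R) : Prop :=
  0 < e 1%N /\ e 1%N < alpha - 1 /\
  (forall i, (1 <= i)%N -> (i < k)%N -> e i < e i.+1 /\ beta * e i.+1 < e i + alpha - 1) /\
  e k < 1 /\ beta < e k + alpha - 1.

Lemma exps (alpha beta : R) :
  1 <= beta -> beta < alpha -> alpha < 2 ->
  exists k : nat, (1 <= k)%N /\ (Z.of_nat k.+1 <= ell0 alpha beta)%Z /\
    exists e : nat -> R, exps_spec alpha beta k e.
Proof.
  intros Hb1 Hba Ha2.
  unfold ell0. destruct (Rlt_dec 1 beta) as [Hb|Hb].
  - set r := (2 - beta) * (alpha - 1) / (alpha - beta).
    assert (Hr1 : 1 <= r). { apply div_ge1; nra. }
    assert (Hlb : 0 < ln beta). { rewrite <- ln_1. apply ln_increasing; lra. }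
    assert (Hlr : 0 <= ln r).
    { destruct (Req_dec r 1) as [E|E]. rewrite E ln_1; lra.
      rewrite <- ln_1. left. apply ln_increasing; lra. }
    set L := ln r / ln beta.
    assert (HL : 0 <= L). { unfold L. unfold Rdiv; apply Rmult_le_pos; [lra| left; apply Rinv_0_lt_compat; lra]. }
    set z := Rfloor L.
    assert (Hz : (0 <= z)%Z) by (apply Rfloor_nonneg; lra).
    destruct (Rfloor_spec L) as [Hz1 Hz2]. fold z in Hz1, Hz2.
    exists (Z.to_nat z).+1. split; [lia|]. split; [simpl; lia|].
    set k := (Z.to_nat z).+1.
    assert (Hk : INR k = IZR z + 1). { unfold k. rewrite S_INR INR_Z2N //. }
    assert (Hbk : r < beta ^ k).
    { apply ln_lt_inv; [lra| apply pow_lt; lra|]. rewrite ln_pow; [|lra].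
      rewrite Hk. unfold L in Hz2.
      apply (Rmult_lt_compat_r (ln beta)) in Hz2; [|lra].
      unfold Rdiv in Hz2. rewrite Rmult_assoc Rinv_l in Hz2; lra. }
    assert (Hbk1 : beta ^ (Z.to_nat z) <= r).
    { destruct (Rle_dec (beta ^ (Z.to_nat z)) r) as [H|H]; [exact H|].
      exfalso. apply Rnot_le_lt in H.
      apply ln_increasing in H; [|lra]. rewrite ln_pow in H; [|lra].
      rewrite INR_Z2N in H; [|lia]. unfold L in Hz1.
      apply (Rmult_le_compat_r (ln beta)) in Hz1; [|lra].
      unfold Rdiv in Hz1. rewrite Rmult_assoc Rinv_l in Hz1; lra. }
    set w := (alpha - 1) * (2 - beta).
    assert (Hw : 0 < w) by (unfold w; nra).
    assert (Hwr : w = r * (alpha - beta)). { unfold r, w. field. lra. }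
    set ebar := fun i : nat => (alpha - 1 - w / beta ^ (Nat.pred i)) / (beta - 1).
    set tau := beta - alpha + 1.
    assert (Hq : 0 < beta ^ (Z.to_nat z)) by (apply pow_lt; lra).
    assert (Hkq : beta ^ k = beta * beta ^ (Z.to_nat z)) by reflexivity.
    assert (Hek : tau < ebar k).
    { unfold ebar, tau. simpl Nat.pred.
      remember (beta ^ (Z.to_nat z)) as q eqn:Eq.
      assert (HW : w / q < beta * (alpha - beta)).
      { apply (Rmult_lt_reg_r q); [lra|]. unfold Rdiv. rewrite Rmult_assoc Rinv_l; [|lra].
        rewrite Hwr. nra. }
      apply (Rmult_lt_reg_r (beta - 1)); [lra|]. unfold Rdiv at 2.
      rewrite Rmult_assoc Rinv_l; [|lra]. nra. }
    assert (Hek1 : ebar k <= 1).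
    { unfold ebar. simpl Nat.pred.
      remember (beta ^ (Z.to_nat z)) as q eqn:Eq.
      assert (HW : alpha - beta <= w / q).
      { apply (Rmult_le_reg_r q); [lra|]. unfold Rdiv. rewrite Rmult_assoc Rinv_l; [|lra].
        rewrite Hwr. nra. }
      apply (Rmult_le_reg_r (beta - 1)); [lra|]. unfold Rdiv.
      rewrite Rmult_assoc Rinv_l; [|lra]. nra. }
    assert (Hkpos : 0 < INR k) by (rewrite Hk; apply IZR_le in Hz; lra).
    assert (Hbkp : 0 < beta ^ k) by (apply pow_lt; lra).
    set eta := Rmin ((alpha - 1) / 2) (Rmin (w / beta ^ k / 2) ((ebar k - tau) / (2 * INR k))).
    assert (Heta0 : 0 < eta).
    { unfold eta. repeat apply Rmin_pos; apply Rdiv_lt_0_compat; try lra.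
      apply Rdiv_lt_0_compat; lra. }
    assert (Heta1 : eta <= (alpha - 1) / 2) by apply Rmin_l.
    assert (Heta2 : eta <= w / beta ^ k / 2) by (eapply Rle_trans; [apply Rmin_r|apply Rmin_l]).
    assert (Heta3 : eta <= (ebar k - tau) / (2 * INR k)) by (eapply Rle_trans; [apply Rmin_r|apply Rmin_r]).
    assert (Hwbk : 0 < w / beta ^ k) by (apply Rdiv_lt_0_compat; lra).
    exists (fun i => ebar i - eta * INR i).
    assert (Hrec : forall j, beta * ebar (j.+2) = ebar j.+1 + alpha - 1).
    { intro j. unfold ebar. simpl Nat.pred. simpl pow.
      assert (0 < beta ^ j) by (apply pow_lt; lra). field. split; lra. }
    assert (Hinc : forall j, ebar (j.+2) - ebar j.+1 = w / beta ^ j.+1).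
    { intro j. unfold ebar. simpl Nat.pred. simpl pow.
      assert (0 < beta ^ j) by (apply pow_lt; lra). field. split; lra. }
    split; [|split; [|split; [|split]]].
    + assert (ebar 1%N = alpha - 1). { unfold ebar. simpl. unfold w. field. lra. }
      rewrite H INR_1. lra.
    + assert (ebar 1%N = alpha - 1). { unfold ebar. simpl. unfold w. field. lra. }
      rewrite H INR_1. lra.
    + intros i Hi1 Hik. destruct i as [|j]; [lia|]. cbv beta. split.
      * rewrite S_INR. pose proof (Hinc j).
        assert (beta ^ j.+1 <= beta ^ k) by (apply Rle_pow; [lra| apply/leP; lia]).
        assert (w / beta ^ k <= w / beta ^ j.+1).
        { unfold Rdiv. apply Rmult_le_compat_l; [lra|]. apply Rinv_le_contravar; [apply pow_lt; lra| lra]. }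
        rewrite !S_INR; lra.
      * rewrite Rmult_minus_distr_l Hrec !S_INR.
        assert (0 <= INR j) by apply pos_INR. assert (0 <= (beta*eta - eta)*(INR j + 2)) by (apply Rmult_le_pos; nra). clearbody ebar. nra.
    + assert (eta * INR k > 0) by nra. lra.
    + assert (eta * INR k <= (ebar k - tau) / 2).
      { apply (Rmult_le_compat_r (INR k)) in Heta3; [|lra].
        replace ((ebar k - tau) / (2 * INR k) * INR k) with ((ebar k - tau) / 2) in Heta3 by (field; lra).
        lra. }
      unfold tau in *. lra.
  - assert (Hb' : beta = 1) by lra.
    assert (Ha1 : 0 < alpha - 1) by lra.
    set x := 1 / (alpha - 1).
    assert (Hx : 1 < x). { unfold x. apply (Rmult_lt_reg_r (alpha - 1)); [lra|].
      unfold Rdiv. rewrite Rmult_assoc Rinv_l; lra. }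
    set z := Rfloor x.
    destruct (Rfloor_spec x) as [Hz1 Hz2]. fold z in Hz1, Hz2.
    assert (Hz : (1 <= z)%Z). { assert (0 < IZR z) by lra. apply lt_IZR in H. lia. }
    exists (Z.to_nat z). split; [lia|]. split; [simpl; lia|].
    set k := Z.to_nat z.
    assert (Hk : INR k = IZR z) by (unfold k; apply INR_Z2N; lia).
    assert (Hkpos : 1 <= INR k). { rewrite Hk. apply IZR_le in Hz. lra. }
    assert (Hk1 : INR k * (alpha - 1) <= 1).
    { rewrite Hk. unfold x in Hz1. apply (Rmult_le_compat_r (alpha - 1)) in Hz1; [|lra].
      unfold Rdiv in Hz1. rewrite Rmult_assoc Rinv_l in Hz1; lra. }
    assert (Hk2 : 1 < (INR k + 1) * (alpha - 1)).
    { rewrite Hk. unfold x in Hz2. apply (Rmult_lt_compat_r (alpha - 1)) in Hz2; [|lra].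
      unfold Rdiv in Hz2. rewrite Rmult_assoc Rinv_l in Hz2; lra. }
    set eta := Rmin ((alpha - 1) / 2) (((INR k + 1) * (alpha - 1) - 1) / (2 * INR k)).
    assert (Heta0 : 0 < eta).
    { unfold eta. apply Rmin_pos; apply Rdiv_lt_0_compat; lra. }
    assert (Heta1 : eta <= (alpha - 1) / 2) by apply Rmin_l.
    assert (Heta2 : eta <= ((INR k + 1) * (alpha - 1) - 1) / (2 * INR k)) by apply Rmin_r.
    exists (fun i => INR i * (alpha - 1 - eta)).
    rewrite Hb'.
    split; [|split; [|split; [|split]]].
    + rewrite INR_1. lra.
    + rewrite INR_1. lra.
    + intros i _ _. rewrite S_INR. split; nra.
    + nra.
    + assert (eta * INR k <= ((INR k + 1) * (alpha - 1) - 1) / 2).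
      { apply (Rmult_le_compat_r (INR k)) in Heta2; [|lra].
        replace (((INR k + 1) * (alpha - 1) - 1) / (2 * INR k) * INR k) with (((INR k + 1) * (alpha - 1) - 1) / 2) in Heta2 by (field; lra).
        lra. }
      nra.
Qed.

Lemma Rpow_pos x a : 0 < Rpower x a.
Proof. unfold Rpower. apply exp_pos. Qed.

Lemma Rpow_ge1 x a : 1 <= x -> 0 <= a -> 1 <= Rpower x a.
Proof. intros Hx Ha. rewrite <- (Rpower_O x); [|lra]. apply Rle_Rpower; lra. Qed.

Lemma Rpow_mono x a b : 1 <= x -> a <= b -> Rpower x a <= Rpower x b.
Proof. intros. apply Rle_Rpower; lra. Qed.

Lemma Rpow_base x y a : 0 <= a -> 0 < x <= y -> Rpower x a <= Rpower y a.
Proof. intros. apply Rle_Rpower_l; lra. Qed.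

Definition ev (P : nat -> Prop) := exists N : nat, forall n : nat, (N <= n)%N -> P n.

Lemma ev_and P Q : ev P -> ev Q -> ev (fun n => P n /\ Q n).
Proof.
  intros [N1 H1] [N2 H2]. exists (maxn N1 N2). intros n Hn.
  split; [apply H1|apply H2]; lia.
Qed.

Lemma ev_mono (P Q : nat -> Prop) : ev P -> (forall n, P n -> Q n) -> ev Q.
Proof. intros [N H] HPQ. exists N. intros n Hn. apply HPQ, H, Hn. Qed.

Lemma ev_fin (m : nat) (P : nat -> nat -> Prop) :
  (forall i, (i < m)%N -> ev (P i)) -> ev (fun n => forall i, (i < m)%N -> P i n).
Proof.
  elim: m => [|m IH] H.
  - exists 0%N. intros n _ i Hi. lia.
  - destruct (IH (fun i Hi => H i (leqW Hi))) as [N1 H1].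
    destruct (H m (ltnSn m)) as [N2 H2].
    exists (maxn N1 N2). intros n Hn i Hi.
    destruct (ltnP i m) as [Him|Him].
    + apply H1; [lia|exact Him].
    + have -> : i = m by lia. apply H2; lia.
Qed.

Lemma ev_ge (c : R) : ev (fun n => c <= INR n).
Proof.
  destruct (archimed c) as [H1 H2].
  exists (Z.to_nat (Z.max 0 (up c))). intros n Hn.
  move/leP: Hn => Hn. apply le_INR in Hn.
  rewrite INR_IZR_INZ Z2Nat.id in Hn; [|lia].
  assert (IZR (up c) <= IZR (Z.max 0 (up c))) by (apply IZR_le; lia).
  lra.
Qed.

Lemma ev_pow a b A B : a < b -> 0 < B ->
  ev (fun n => A * Rpower (INR n) a <= B * Rpower (INR n) b).
Proof.
  intros Hab HB.
  set M := Rmax 1 (Rpower (Rmax 1 (A / B)) (/ (b - a))).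
  eapply ev_mono; [apply (ev_ge M)|]. intros n Hn.
  assert (HM1 : 1 <= M) by apply Rmax_l.
  assert (HM2 : Rpower (Rmax 1 (A / B)) (/ (b - a)) <= M) by apply Rmax_r.
  assert (Hn1 : 1 <= INR n) by lra.
  assert (Hpa := Rpow_pos (INR n) a).
  assert (HAB : A / B <= Rpower (INR n) (b - a)).
  { eapply Rle_trans; [apply Rmax_r with (x := 1)|].
    rewrite <- (Rpower_1 (Rmax 1 (A / B))); [|assert (1 <= Rmax 1 (A/B)) by apply Rmax_l; lra].
    replace 1 with (/ (b - a) * (b - a)) at 2 by (field; lra).
    rewrite <- Rpower_mult. apply Rpow_base; [lra|]. split; [apply Rpow_pos|lra]. }
  replace b with (a + (b - a)) at 1 by ring. rewrite Rpower_plus.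
  assert (A <= B * Rpower (INR n) (b - a)).
  { apply (Rmult_le_compat_l B) in HAB; [|lra].
    replace (B * (A / B)) with A in HAB by (field; lra). exact HAB. }
  nra.
Qed.

Lemma ln_lt_id y : 0 < y -> ln y < y.
Proof.
  intro Hy. rewrite <- (ln_exp y) at 2. apply ln_increasing; [lra|].
  pose proof (exp_ineq1 y). lra.
Qed.

Lemma ev_ln e A : 0 < e -> ev (fun n => A * ln (INR n) <= Rpower (INR n) e).
Proof.
  intro He.
  eapply ev_mono; [apply ev_and; [apply (ev_ge 1)| apply (ev_pow (e/2) e (Rmax A 0 * (2 / e)) 1); lra]|].
  intros n [Hn H]. 
  assert (Hl : 0 <= ln (INR n)). { destruct (Req_dec (INR n) 1) as [E|E]. rewrite E ln_1; lra.
    rewrite <- ln_1. left; apply ln_increasing; lra. }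
  assert (Hl2 : ln (INR n) = 2 / e * ln (Rpower (INR n) (e/2))).
  { rewrite ln_Rpower. field. lra. }
  assert (Hl3 : ln (Rpower (INR n) (e / 2)) < Rpower (INR n) (e / 2)) by (apply ln_lt_id, Rpow_pos).
  assert (A * ln (INR n) <= Rmax A 0 * ln (INR n)) by (apply Rmult_le_compat_r; [lra|apply Rmax_l]).
  assert (0 <= Rmax A 0) by apply Rmax_r.
  assert (0 < 2 / e) by (apply Rdiv_lt_0_compat; lra).
  rewrite Hl2 in H0 |- *.
  assert (Rmax A 0 * (2 / e * ln (Rpower (INR n) (e / 2))) <= Rmax A 0 * (2 / e) * Rpower (INR n) (e / 2)).
  { rewrite <- Rmult_assoc. apply Rmult_le_compat_l; [nra|lra]. }
  lra.
Qed.

Local Close Scope R_scope.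
Set Implicit Arguments. Unset Strict Implicit.

Section Z.
Variables (V : finType) (G : rel V) (F : graph_family).
Hypothesis Gsym : forall x y, G x y = G y x.
Hypothesis Gfree : F_free F G.

Definition ecount (X Y : {set V}) :=
  #|[set p : V * V | (p.1 \in X) && (p.2 \in Y) && G p.1 p.2]|.

Lemma ecount_le_z (X Y : {set V}) : [disjoint X & Y] ->
  (ecount X Y <= zarank #|X| #|Y| F)%N.
Proof.
  move=> dXY.
  pose E : {set 'I_#|X| * 'I_#|Y|} := [set p | G (enum_val p.1) (enum_val p.2)].
  pose phi := fun p : 'I_#|X| * 'I_#|Y| => (enum_val p.1, enum_val p.2).
  apply: (@leq_trans #|phi @: E|).
    apply: subset_leq_card. apply/subsetP => -[x y]; rewrite inE /= => /andP[/andP[xX yY] Gxy].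
    apply/imsetP. exists (enum_rank_in xX x, enum_rank_in yY y).
      by rewrite inE /= !(enum_rankK_in xX xX) ?(enum_rankK_in yY yY).
    by rewrite /phi /= (enum_rankK_in xX xX) (enum_rankK_in yY yY).
  apply: (leq_trans (leq_imset_card _ _)).
  rewrite /zarank. apply: (@leq_bigmax_cond _ (fun E => pbool (F_free F (bip_graph E))) (fun E => #|E|) E).
  rewrite /pbool. case: excluded_middle_informative => // nfree; exfalso; apply: nfree.
  move=> [k [H [HF [f [finj fedge]]]]]. apply: Gfree.
  pose g := fun s : 'I_#|X| + 'I_#|Y| => match s with inl i => enum_val i | inr j => enum_val j end.
  exists k, H; split => //. exists (fun x => g (f x)); split.
  - move=> a b /= eab; apply: finj.
    case Ha: (f a) => [i|j]; case Hb: (f b) => [i'|j']; rewrite Ha Hb /g in eab.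
    + by rewrite (enum_val_inj eab).
    + exfalso. have h1 : (enum_val i \in X) by apply: enum_valP.
      have h2 : (enum_val j' \in Y) by apply: enum_valP.
      rewrite eab in h1. by rewrite (disjointFr dXY h1) in h2.
    + exfalso. have h1 : (enum_val i' \in X) by apply: enum_valP.
      have h2 : (enum_val j \in Y) by apply: enum_valP.
      rewrite -eab in h1. by rewrite (disjointFr dXY h1) in h2.
    + by rewrite (enum_val_inj eab).
  - move=> a b /fedge. rewrite /g /bip_graph.
    case: (f a) => [i|j]; case: (f b) => [i'|j'] //; rewrite inE //=.
    by rewrite Gsym.
Qed.

Lemma ecount_swap X Y : (ecount X Y <= ecount Y X)%N.
Proof.
  rewrite /ecount. pose sw := fun p : V * V => (p.2, p.1).
  apply: (@leq_trans #|sw @: [set p : V * V | (p.1 \in Y) && (p.2 \in X) && G p.1 p.2]|); last exact: leq_imset_card.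
  apply: subset_leq_card. apply/subsetP => -[x y]; rewrite inE /= => /andP[/andP[xX yY] Gxy].
  apply/imsetP. exists (y, x) => //. by rewrite inE /= yY xX Gsym.
Qed.

End Z.

Section G.
Variables (V : finType) (G : rel V).

Definition nbr (U : {set V}) := [set w | [exists x in U, G x w]].
Definition deg (x : V) := #|[set w | G x w]|.

Lemma ecount_nbr (U : {set V}) :
  ecount G U (nbr U) = \sum_(x in U) deg x.
Proof.
  rewrite /ecount -sum1_card.
  rewrite (partition_big (fun p : V * V => p.1) (fun x => x \in U)); last first.
    by move=> [x y]; rewrite inE /= => /andP[/andP[]].
  apply: eq_bigr => x xU. rewrite /deg -sum1_card.
  rewrite (reindex (fun w => (x, w))) /=; last first.
    exists (fun p : V * V => p.2) => [w _ //|[x' w]]. rewrite !inE /= => /andP[_ /eqP ->] //.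
    idtac.
  apply: eq_bigl => w. rewrite !inE /= eqxx andbT xU /=.
  case Gxw: (G x w); rewrite ?andbF ?andbT //.
  apply/existsP; exists x. by rewrite xU Gxw.
Qed.

Lemma fib_sum (f : V -> option V) (A : {set V}) (v0 : V) :
  #|[set y | [exists x in A, f y == Some x]]| = \sum_(x in A) #|[set y | f y == Some x]|.
Proof.
  rewrite -sum1_card.
  rewrite (partition_big (fun y => odflt v0 (f y)) (fun x => x \in A)); last first.
    move=> y; rewrite inE => /existsP[x /andP[xA /eqP ->]] //.
  apply: eq_bigr => x xA. rewrite -sum1_card. apply: eq_bigl => y.
  rewrite !inE. case fy: (f y) => [x'|] /=.
  - apply/idP/idP.
    + by move=> /andP[_ /eqP ->].
    + move=> /eqP [] ->. rewrite eqxx andbT. apply/existsP; exists x. by rewrite xA eqxx.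
  - apply/negbTE/negP => /andP[/existsP[z /andP[_ H]] _]. by [].
Qed.

End G.

Section Step.
Variables (V : finType) (G : rel V) (col : V -> bool) (u : V).
Hypothesis Hcol : forall x y, G x y -> col x != col y.

Definition good (j : nat) (Tree Last : {set V}) (P : V -> seq V) (B : nat) (b : bool) : Prop :=
  u \in Tree /\ Last \subset Tree /\
  (forall v, v \in Tree -> is_path_from_to G u v (P v) /\ (size (P v) <= j)%N /\ {subset P v <= Tree}) /\
  (forall v, v \in Last -> col v = b) /\
  (forall w, w != u -> (#|[set v in Last | w \in P v]| <= B)%N).

Definition domf (f : {ffun V -> option V}) := [set y | f y != None].
Definition fibr (f : {ffun V -> option V}) x := [set y | f y == Some x].

Definition validb (Tree Last : {set V}) (K s' : nat) (f : {ffun V -> option V}) : bool :=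
  [&& [forall y, if f y is Some x then [&& x \in Last, G x y & y \notin Tree] else true],
      [forall x, #|fibr f x| <= K] & #|domf f| <= s'].

Lemma neq_negb (a c : bool) : a != c -> c = ~~ a.
Proof. by case: a; case: c. Qed.

Lemma fib_le (f : {ffun V -> option V}) (A : {set V}) :
  (\sum_(x in A) #|fibr f x| <= #|domf f|)%N.
Proof.
  rewrite /fibr -(fib_sum _ _ u). apply: subset_leq_card. apply/subsetP => y.
  rewrite !inE => /existsP[x /andP[_ /eqP ->]] //.
Qed.

Lemma step j Tree Last P B b K s' :
  good j Tree Last P B b ->
  (forall U : {set V}, U \subset Last -> (K * (#|Last| - #|U|) < s')%N -> (s' <= #|nbr G U :\: Tree|)%N) ->
  exists Y P', good j.+1 (Tree :|: Y) Y P' (K * B + 1) (~~ b) /\ #|Y| = s' /\ [disjoint Y & Tree].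
Proof.
  move=> [uT [LT [Hp [Hc Hl]]]] Hh.
  pose f0 : {ffun V -> option V} := [ffun=> None].
  have v0 : validb Tree Last K s' f0.
    apply/and3P; split.
    - by apply/forallP => y; rewrite ffunE.
    - apply/forallP => x. rewrite (_ : fibr f0 x = set0) ?cards0 //.
      by apply/setP => y; rewrite !inE ffunE.
    - rewrite (_ : domf f0 = set0) ?cards0 //.
      by apply/setP => y; rewrite !inE ffunE.
  case: (arg_maxnP (fun f => #|domf f|) v0) => fm vm maxm.
  move/and3P: vm => [/forallP vf /forallP vK vs].
  have Hdom : #|domf fm| = s'.
    apply/eqP; rewrite eqn_leq vs /= leqNgt; apply/negP => lt.
    pose U := [set x in Last | #|fibr fm x| < K].
    have sub : nbr G U :\: Tree \subset domf fm.
      apply/subsetP => y; rewrite !inE => /andP[yT /existsP[x /andP[xU Gxy]]].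
      case fy: (fm y) => [x0|] //.
      move: xU; rewrite inE => /andP[xL fxK].
      pose f' : {ffun V -> option V} := [ffun z => if z == y then Some x else fm z].
      have df' : domf f' = y |: domf fm.
        apply/setP => z; rewrite !inE ffunE. by case: (z == y).
      have ydf : y \notin domf fm by rewrite inE fy.
      have vf' : validb Tree Last K s' f'.
        apply/and3P; split.
        - apply/forallP => z; rewrite ffunE. case: eqP => [->|_]; last exact: vf.
          by rewrite xL Gxy yT.
        - apply/forallP => x0. case: (eqVneq x0 x) => [->|nx].
          + rewrite (_ : fibr f' x = y |: fibr fm x).
              rewrite cardsU1. move: fxK; case: (y \in fibr fm x) => /=; lia.
            apply/setP => z; rewrite !inE ffunE. by case: (z =P y) => [->|_]; rewrite ?eqxx.
          + rewrite (_ : fibr f' x0 = fibr fm x0); first exact: vK.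
            apply/setP => z; rewrite !inE ffunE. case: (z =P y) => [->|//].
            rewrite fy /=. apply/negbTE/eqP => -[eq]. by rewrite eq eqxx in nx.
        - rewrite df' cardsU1 ydf /=. lia.
      have := maxm f' vf'. rewrite df' cardsU1 ydf /=. lia.
    have HK : (K * #|Last :\: U| <= #|domf fm|)%N.
      apply: leq_trans (fib_le fm (Last :\: U)).
      rewrite mulnC -sum_nat_const. apply: leq_sum => x. rewrite !inE => /andP[nU xL].
      by move: nU; rewrite xL /= -leqNgt.
    have UL : U \subset Last by apply/subsetP => x; rewrite inE => /andP[].
    rewrite cardsDS // in HK.
    have := Hh U UL ltac:(lia). have := subset_leq_card sub. lia.
  pose P' := fun v => if fm v is Some x then rcons (P x) v else P v.
  exists (domf fm), P'. split; last split => //; last first.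
    rewrite disjoint_subset; apply/subsetP => y; rewrite inE. case fy: (fm y) => [x|] //= _.
    rewrite inE. by move: (vf y); rewrite fy => /and3P[].
  have Hsome : forall v x, fm v = Some x -> [/\ x \in Last, G x v & v \notin Tree].
    by move=> v x fv; move: (vf v); rewrite fv => /and3P[].
  split; [by rewrite inE uT|]. split; [by apply/subsetP => y yY; rewrite inE yY orbT|].
  split; [|split].
  - move=> v; rewrite inE /P'. case fv: (fm v) => [x|].
    + case: (Hsome _ _ fv) => xL Gxv vT _.
      have xT : x \in Tree by apply: (subsetP LT).
      case: (Hp x xT) => [[pa [la ua]] [sz sb]].
      split; [split; [|split]|split].
      * by rewrite rcons_path pa la Gxv.
      * by rewrite last_rcons.
      * rewrite -rcons_cons rcons_uniq ua andbT inE negb_or.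
        apply/andP; split; first by apply/eqP => e; rewrite e uT in vT.
        by apply/negP => /sb; rewrite (negbTE vT).
      * by rewrite size_rcons.
      * move=> w; rewrite mem_rcons inE => /orP[/eqP ->|/sb wT].
          by rewrite inE orbC inE fv.
        by rewrite inE wT.
    + move=> /orP[vT|]; last by rewrite inE fv. case: (Hp v vT) => [pp [sz sb]].
      split => //; split; first exact: leqW.
      by move=> w /sb wT; rewrite inE wT.
  - move=> v; rewrite inE. case fv: (fm v) => [x|] // _.
    case: (Hsome _ _ fv) => xL Gxv _. have := Hcol Gxv. rewrite (Hc x xL).
    by move=> /neq_negb.
  - move=> w wu.
    pose A := [set x in Last | w \in P x].
    apply: (@leq_trans #|[set y | [exists x in A, fm y == Some x]] :|: [set w]|).
      apply: subset_leq_card. apply/subsetP => v. rewrite !inE /P'.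
      case fv: (fm v) => [x|] //=. rewrite mem_rcons inE => /orP[/eqP ->|wP].
        by rewrite eqxx orbT.
      apply/orP; left. apply/existsP; exists x. rewrite eqxx andbT inE wP andbT.
      by case: (Hsome _ _ fv).
    apply: (leq_trans (leq_card_setU _ _)). rewrite cards1 leq_add2r.
    rewrite (fib_sum _ _ u). apply: (@leq_trans (\sum_(x in A) K)).
      by apply: leq_sum => x _; apply: vK.
    rewrite sum_nat_const mulnC. apply: leq_mul => //. exact: Hl.
Qed.

End Step.

Definition sigma (s : nat -> nat) i := (\sum_(j < i.+1) s j)%N.
Fixpoint Bseq (K : nat -> nat) i := match i with 0 => 0%N | i'.+1 => (K i' * Bseq K i' + 1)%N end.

Section Build.
Variables (V : finType) (G : rel V) (col : V -> bool) (u : V).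
Hypothesis Hcol : forall x y, G x y -> col x != col y.

Lemma build (l : nat) (s K : nat -> nat) : s 0%N = 1%N ->
  (forall i, (i < l)%N -> forall (Tree Last : {set V}) b, u \in Tree -> Last \subset Tree ->
     (#|Tree| <= sigma s i)%N -> #|Last| = s i -> (forall v, v \in Last -> col v = b) ->
     forall U : {set V}, U \subset Last -> (K i * (#|Last| - #|U|) < s i.+1)%N ->
     (s i.+1 <= #|nbr G U :\: Tree|)%N) ->
  forall m, (m <= l)%N -> exists Tree Last P b,
    good G col u m Tree Last P (Bseq K m) b /\ #|Last| = s m /\ (#|Tree| <= sigma s m)%N.
Proof.
  move=> s0 Hst. elim=> [|m IH] ml.
  - exists [set u], [set u], (fun _ => [::]), (col u).
    split; last (split; [by rewrite cards1 s0| by rewrite cards1 /sigma big_ord_recr big_ord0 /= s0]).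
    split; [by rewrite inE|]. split; [by []|]. split; [|split].
    + move=> v; rewrite inE => /eqP ->. split; last by split.
      by rewrite /is_path_from_to /=.
    + by move=> v; rewrite inE => /eqP ->.
    + move=> w _. rewrite (_ : [set v in [set u] | w \in [::]] = set0) ?cards0 //.
      by apply/setP => v; rewrite !inE andbF.
  - have [Tree [Last [P [b [gd [cL cT]]]]]] := IH (ltnW ml).
    have gd' := gd. case: gd' => [uT [LT [_ [Hc _]]]].
    have [Y [P' [gd2 [cY dY]]]] := step Hcol gd (Hst m ml Tree Last b uT LT cT cL Hc).
    exists (Tree :|: Y), Y, P', (~~ b). split => //. split => //.
    rewrite cardsU (_ : Tree :&: Y = set0) ?cards0 ?subn0.
      by rewrite /sigma big_ord_recr /= -/(sigma s m) cY leq_add2r.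
    apply/setP => x; rewrite !inE. apply/negP => /andP[xT xY].
    by rewrite (disjointFr dY xY) in xT.
Qed.
End Build.

Local Open Scope R_scope.

Lemma INR_leq (a b : nat) : (a <= b)%N -> INR a <= INR b.
Proof. move/leP. apply: le_INR. Qed.

Lemma expand (F : graph_family) (rho C alpha beta : R) (V : finType) (G : rel V) (col : V -> bool) :
  (forall x y, G x y = G y x) -> F_free F G -> (forall x y, G x y -> col x != col y) ->
  1 <= alpha -> 0 <= beta -> 0 < rho ->
  (forall m n : nat, (0 < m)%N -> (m <= n)%N ->
       INR (zarank m n F) <= rho * INR m * Rpower (INR n) (alpha - 1) + C * Rpower (INR n) beta) ->
  forall (D : nat) (U : {set V}) b T, (0 < D)%N -> (forall x, (D <= deg G x)%N) ->
  (forall x, x \in U -> col x = b) -> (0 < #|U|)%N ->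
  INR #|nbr G U| <= T -> INR #|U| <= T ->
  INR #|U| * INR D <= rho * INR #|U| * Rpower T (alpha - 1) + Rmax C 0 * Rpower T beta.
Proof.
  move=> Gsym Gfree Hcol Ha Hb Hr Hz D U b T D0 HD HU U0 HN HUT.
  have dis : [disjoint U & nbr G U].
    rewrite disjoint_subset; apply/subsetP => x xU; rewrite !inE.
    apply/negP => /existsP[y /andP[yU Gyx]].
    by move: (Hcol _ _ Gyx); rewrite (HU _ xU) (HU _ yU) eqxx.
  have [x xU] : exists x, x \in U by apply/set0Pn; rewrite -card_gt0.
  have N0 : (0 < #|nbr G U|)%N.
    have : (0 < deg G x)%N by apply: leq_trans (HD x).
    rewrite /deg card_gt0 => /set0Pn[w]; rewrite inE => Gxw.
    rewrite card_gt0; apply/set0Pn; exists w; rewrite inE; apply/existsP; exists x; by rewrite xU.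
  have He : (#|U| * D <= ecount G U (nbr G U))%N.
    rewrite ecount_nbr -sum_nat_const. by apply: leq_sum => y _.
  have He' := INR_leq He. rewrite mult_INR in He'.
  have HU1 : 1 <= INR #|U| by apply: (INR_leq (a:=1%N) U0).
  have HN1 : 1 <= INR #|nbr G U| by apply: (INR_leq (a:=1%N) N0).
  have HCmax : C <= Rmax C 0 by apply: Rmax_l.
  have HC0 : 0 <= Rmax C 0 by apply: Rmax_r.
  have Cb : forall y, 0 < y <= T -> C * Rpower y beta <= Rmax C 0 * Rpower T beta.
    move=> y Hy. have := Rpow_base y T beta Hb Hy. have := Rpow_pos y beta. nra.
  case: (leqP #|U| #|nbr G U|) => cmp.
  - have := ecount_le_z Gsym Gfree dis.
    move/INR_leq => H1. have H2 := Hz _ _ U0 cmp.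
    have := Rpow_base (INR #|nbr G U|) T (alpha - 1) ltac:(lra) (conj (ltac:(lra) : 0 < INR #|nbr G U|) HN).
    have := Cb (INR #|nbr G U|) ltac:(lra).
    move=> h3 h4.
    have h5 : rho * INR #|U| * Rpower (INR #|nbr G U|) (alpha - 1) <= rho * INR #|U| * Rpower T (alpha - 1).
      apply: Rmult_le_compat_l => //. apply: Rmult_le_pos; lra.
    lra.
  - have dis' : [disjoint nbr G U & U] by rewrite disjoint_sym.
    have := ecount_le_z Gsym Gfree dis'. move/INR_leq => H1.
    have H0 := INR_leq (ecount_swap Gsym U (nbr G U)).
    have H2 := Hz _ _ N0 (ltnW cmp).
    have cmpR : INR #|nbr G U| <= INR #|U| by apply: INR_leq; apply: ltnW.
    have h3 := Rpow_base (INR #|U|) T (alpha - 1) ltac:(lra) (conj (ltac:(lra) : 0 < INR #|U|) HUT).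
    have h4 := Cb (INR #|U|) ltac:(lra).
    have h6 := Rpow_pos (INR #|U|) (alpha - 1).
    have h5 : rho * INR #|nbr G U| * Rpower (INR #|U|) (alpha - 1) <= rho * INR #|U| * Rpower T (alpha - 1).
      apply: (@Rle_trans _ (rho * INR #|U| * Rpower (INR #|U|) (alpha - 1))).
        apply: Rmult_le_compat_r; [lra|]. apply: Rmult_le_compat_l; lra.
      apply: Rmult_le_compat_l => //. apply: Rmult_le_pos; lra.
    lra.
Qed.

Definition cl (x : R) : nat := Z.to_nat (up x).

Lemma cl_spec x : 0 <= x -> x < INR (cl x) <= x + 1.
Proof.
  intro Hx. destruct (archimed x) as [H1 H2]. unfold cl.
  assert (Hz : (0 <= up x)%Z). { assert (0 < IZR (up x)) by lra. apply lt_IZR in H. lia. }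
  rewrite INR_Z2N //. lra.
Qed.

Lemma sigma_S s i : sigma s i.+1 = (sigma s i + s i.+1)%N.
Proof. by rewrite /sigma big_ord_recr. Qed.

Lemma sigma_0 s : sigma s 0 = s 0%N.
Proof. by rewrite /sigma big_ord_recr big_ord0. Qed.

Lemma sigma_mono s i j : (i <= j)%N -> (sigma s i <= sigma s j)%N.
Proof.
  elim: j => [|j IH] ij.
  - by have -> : i = 0%N by lia.
  - case: (ltngtP i j.+1) ij => // [lt _|-> _ //].
    rewrite sigma_S. apply: leq_trans (IH lt) _. exact: leq_addr.
Qed.

Lemma sigma_le_R (s : nat -> nat) (M : R) i :
  (forall j, (j <= i)%N -> INR (s j) <= M) -> INR (sigma s i) <= INR i.+1 * M.
Proof.
  elim: i => [|i IH] H.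
  - rewrite sigma_0 INR_1. have := H 0%N (leqnn _); intros; lra.
  - rewrite sigma_S plus_INR S_INR.
    have h1 := IH (fun j ji => H j (leqW ji)). have h2 := H i.+1 (leqnn _).
    have h3 : (INR i.+1 + 1) * M = INR i.+1 * M + M by ring. match goal with |- ?g => idtac g end; lra.
Qed.

Lemma Bbound (K s : nat -> nat) l :
  (forall j, (1 <= j)%N -> (j < l)%N -> INR (K j) * INR (s j) <= 2 * INR (s j.+1) + INR (s j)) ->
  (forall j, (1 <= j)%N -> (j < l)%N -> (s j <= s j.+1)%N) ->
  forall j, (1 <= j)%N -> (j <= l)%N ->
    (s 1%N <= s j)%N /\ INR (Bseq K j) * INR (s 1%N) <= 4 ^ j * INR (s j).
Proof.
  move=> HK Hm. elim=> [|j IH] // j1 jl.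
  case: (ltngtP j 0%N) => // [j0|j0]; last first.
    subst j. split => //. rewrite /= muln0 add0n INR_1. have := pos_INR (s 1%N); intros; lra.
  have [IH1 IH2] := IH j0 (ltnW jl).
  have mj := Hm j j0 jl. split; first exact: leq_trans mj.
  have hK := HK j j0 jl.
  rewrite /= plus_INR mult_INR INR_1.
  have r1 := INR_leq IH1. have r2 := INR_leq mj. have r3 := INR_leq (leq_trans IH1 mj).
  have p4 : 0 < 4 ^ j by apply: pow_lt; lra.
  have pK := pos_INR (K j). have pB := pos_INR (Bseq K j). have ps := pos_INR (s 1%N).
  have : INR (K j) * INR (Bseq K j) * INR (s 1%N) <= INR (K j) * (4 ^ j * INR (s j)).
    rewrite Rmult_assoc. apply: Rmult_le_compat_l => //.
  have : INR (K j) * (4 ^ j * INR (s j)) <= 4 ^ j * (2 * INR (s j.+1) + INR (s j)).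
    rewrite -Rmult_assoc (Rmult_comm (INR (K j))) Rmult_assoc. apply: Rmult_le_compat_l; lra.
  have p41 : 1 <= 4 ^ j by apply: pow_R1_Rle; lra.
  have q1 : 0 <= 4 ^ j * (INR (s j.+1) - INR (s j)) by apply: Rmult_le_pos; lra.
  have q2 : 0 <= (4 ^ j - 1) * INR (s j.+1) by apply: Rmult_le_pos; lra.
  simpl pow. intros. lra.
Qed.

Lemma K_spec a b : (0 < a)%N ->
  (2 * b <= ((2 * b) %/ a + 1) * a)%N /\ INR (((2 * b) %/ a + 1)) * INR a <= 2 * INR b + INR a.
Proof.
  move=> a0. split.
  - rewrite addn1. apply: ltnW. exact: ltn_ceil.
  - have h : (((2*b) %/ a + 1) * a <= 2*b + a)%N by rewrite mulnDl mul1n leq_add2r leq_divM.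
    move/INR_leq: h. rewrite !mult_INR !plus_INR /=. intros; lra.
Qed.

Definition Ef (k : nat) (e : nat -> R) (j : nat) : R :=
  if j == 0%N then 0 else if (j <= k)%N then e j else 1.

Section Ef.
Variables (alpha beta : R) (k : nat) (e : nat -> R).
Hypothesis Hsp : exps_spec alpha beta k e.
Hypothesis Hk1 : (1 <= k)%N.

Lemma Ef_step i : Ef k e i <= Ef k e i.+1.
Proof.
  case: Hsp => [He10 [He1a [Hrec [Hek1 Hekb]]]].
  rewrite /Ef /=. case: (eqVneq i 0%N) => [->|i0] /=.
    rewrite Hk1. lra.
  case: (ltngtP i k) => [ik|ki|->].
  - have := Hrec i ltac:(lia) ik. intros [? ?]; lra.
  - lra.
  - lra.
Qed.

Lemma Ef_mono i j : (i <= j)%N -> Ef k e i <= Ef k e j.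
Proof.
  elim: j => [|j IH] ij.
  - have -> : i = 0%N by lia. lra.
  - case: (ltngtP i j.+1) ij => // [lt _|-> _]; last lra.
    apply: Rle_trans (IH lt) (Ef_step j).
Qed.

Lemma Ef_nonneg j : 0 <= Ef k e j.
Proof. have := Ef_mono (leq0n j). rewrite /Ef /=. lra. Qed.

Lemma Ef_gap i : (i < k)%N -> beta * Ef k e i.+2 < Ef k e i.+1 + alpha - 1.
Proof.
  case: Hsp => [He10 [He1a [Hrec [Hek1 Hekb]]]] ik.
  rewrite /Ef /=. case: (ltngtP i.+1 k) => [lt|gt|eq].
  - have := Hrec i.+1 ltac:(lia) lt. intros [? ?]; lra.
  - lia.
  - rewrite eq. lra.
Qed.
End Ef.

Unset Implicit Arguments.

Theorem mainTheorem5 (alpha beta rho delta : R) :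
  (1 <= beta) -> (beta < alpha) -> (alpha < 2) -> (0 < rho) -> (0 < delta) ->
  exists mu' : R, (0 < mu') /\
  forall (F : graph_family) (C : R),
    (forall k (H : rel 'I_k), F k H -> bipartite_graph H) ->
    (forall m n : nat, (0 < m)%N -> (m <= n)%N ->
       (INR (zarank m n F) <= rho * INR m * Rpower (INR n) (alpha - 1) + C * Rpower (INR n) beta)) ->
    exists N : nat, forall n : nat, (N <= n)%N ->
    forall (V : finType) (G : rel V),
      bipartite_graph G -> F_free F G -> (#|V| <= n)%N ->
      (forall v : V, (delta * Rpower (INR n) (alpha - 1) <= INR #|[set w | G v w]|)) ->
      forall u : V,
      exists (S : {set V}) (P : V -> seq V),
        (mu' * INR n <= INR #|S|) /\
        (forall v, v \in S -> is_path_from_to G u v (P v) /\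
                              (Z.of_nat (size (P v)) <= ell0 alpha beta)%Z) /\
        (forall w, w != u -> (INR #|[set v in S | w \in P v]| <= INR n / ln (INR n))).
Proof.
  move=> Hb1 Hba Ha2 Hr Hd.
  have [k [Hk1 [Hell [e Hsp]]]] := exps alpha beta Hb1 Hba Ha2.
  have Hsp' := Hsp. case: Hsp' => [He10 [He1a [Hrec [Hek1 Hekb]]]].
  pose l := k.+1.
  pose c := Rpower (delta / (2 * rho)) (/ (alpha - 1)).
  have Hc : 0 < c by apply: Rpow_pos.
  have Hcpow : Rpower c (alpha - 1) = delta / (2 * rho).
    rewrite /c Rpower_mult Rinv_l; [|lra]. apply: Rpower_1. apply: Rdiv_lt_0_compat; lra.
  pose mu := Rmin 1 (c / INR (l + 2)).
  have Hl2 : 0 < INR (l + 2) by apply: lt_0_INR; lia.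
  have Hmu0 : 0 < mu by apply: Rmin_pos; [lra| apply: Rdiv_lt_0_compat].
  have Hmu1 : mu <= 1 by apply: Rmin_l.
  have Hmuc : mu * INR (l + 2) <= c.
    have : mu <= c / INR (l + 2) by apply: Rmin_r.
    move=> h. apply (Rmult_le_compat_r (INR (l + 2))) in h; [|lra].
    rewrite /Rdiv Rmult_assoc Rinv_l in h; lra.
  exists mu. split => //.
  move=> F C Hbip Hz.
  pose E := Ef k e.
  pose A := Rmax C 0 * Rpower (2 * INR l.+1) beta.
  have Hev : ev (fun n => 2 <= INR n /\
     3 * Rpower (INR n) (e 1%N) <= delta * Rpower (INR n) (alpha - 1) /\
     2 * Rpower (INR n) (e k) <= mu * Rpower (INR n) 1 /\
     (forall i, (i < k)%N -> A * Rpower (INR n) (beta * E i.+2) <= delta / 4 * Rpower (INR n) (E i.+1 + alpha - 1)) /\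
     (forall i, (i < k)%N -> (1 <= i)%N -> 2 * Rpower (INR n) (e i) <= 1 * Rpower (INR n) (e i.+1)) /\
     (2 * 4 ^ l) * ln (INR n) <= Rpower (INR n) (e 1%N)).
    repeat apply: ev_and.
    - exact: ev_ge.
    - apply: ev_pow => //.
    - apply: ev_pow => //.
    - apply: ev_fin => i ik. apply: ev_pow; [exact: (Ef_gap Hsp)|lra].
    - apply: ev_fin => i ik. case: (posnP i) => [->|i0].
        by exists 0%N => n _ h; lia.
      apply: ev_mono; [apply: (ev_pow (e i) (e i.+1) 2 1)|].
        exact: (proj1 (Hrec i i0 ik)). lra.
      by move=> n h _.
    - apply: ev_ln => //.
  have [N HN] := Hev. exists N => n Hn V G HG Hfree HV Hdeg u.
  have [Hn2 [C1 [C2 [C4 [C5 C6]]]]] := HN n Hn.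
  remember (INR n) as nR eqn:EnR.
  have HnR : 2 <= nR := Hn2.
  have Hpos : forall a, 0 < Rpower nR a := Rpow_pos nR.
  have Hge1 : forall a, 0 <= a -> 1 <= Rpower nR a := fun a ha => Rpow_ge1 nR a ltac:(lra) ha.
  have Hp1 : Rpower nR 1 = nR := Rpower_1 nR ltac:(lra).
  have Hp0 : Rpower nR 0 = 1 := Rpower_O nR ltac:(lra).
  have HE0 : forall j, 0 <= E j := Ef_nonneg Hsp Hk1.
  have HEm : forall i j, (i <= j)%N -> E i <= E j := Ef_mono Hsp Hk1.
  have HEj : forall j, (1 <= j)%N -> (j <= k)%N -> E j = e j.
    move=> j j1 jk. rewrite /E /Ef jk. by case: j j1 {jk}.
  have HEl : E l = 1 by rewrite /E /Ef /l /= ltnn.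
  have HE00 : E 0%N = 0 by [].
  case: HG => [[Gsym Girr] [col Hcol]].
  case: (@arg_minnP V u xpredT (deg G) isT) => x0 _ Hmin.
  pose D := deg G x0.
  have HD : forall x, (D <= deg G x)%N by move=> x; apply: Hmin.
  have HdR : delta * Rpower nR (alpha - 1) <= INR D := Hdeg x0.
  have HdR0 : 0 < delta * Rpower nR (alpha - 1) by apply: Rmult_lt_0_compat.
  have D0 : (0 < D)%N by apply/ltP; apply: INR_lt; rewrite INR_0 /=; lra.
  pose s := fun j => if j == 0%N then 1%N else if (j <= k)%N then cl (Rpower nR (e j)) else cl (mu * nR).
  have s0 : s 0%N = 1%N by [].
  have sj : forall j, (1 <= j)%N -> (j <= k)%N -> Rpower nR (e j) < INR (s j) <= Rpower nR (e j) + 1.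
    move=> j j1 jk. rewrite /s jk. case: j j1 {jk} => // j _ /=. apply: cl_spec. exact: Rlt_le.
  have sl : mu * nR < INR (s l) <= mu * nR + 1.
    rewrite /s /l /= ltnn. apply: cl_spec. apply: Rmult_le_pos; lra.
  have Hej0 : forall j, (1 <= j)%N -> (j <= k)%N -> 0 <= e j.
    move=> j j1 jk. rewrite -(HEj j j1 jk). exact: HE0.
  have Hsup : forall j, (j <= l)%N -> INR (s j) <= 2 * Rpower nR (E j).
    move=> j jl. case: (posnP j) => [->|j0].
      rewrite s0 HE00 Hp0 /=. lra.
    case: (leqP j k) => jk.
      rewrite HEj //. have := sj j j0 jk. have := Hge1 (e j) (Hej0 j j0 jk). intros; lra.
    have -> : j = l by rewrite /l; lia.
    rewrite HEl Hp1. have := sl. have : mu * nR <= 1 * nR by apply: Rmult_le_compat_r; lra.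
    intros; lra.
  have Hek0 : 0 <= e k := Hej0 k Hk1 (leqnn k).
  have Hmun : 2 <= mu * nR.
    have := Hge1 (e k) Hek0. rewrite Hp1 in C2. intros; lra.
  have Hsmu : forall j, (j <= k)%N -> INR (s j) <= mu * nR.
    move=> j jk. apply: (Rle_trans _ _ _ (Hsup j (leqW jk))).
    have := Rpow_mono nR (E j) (E k) ltac:(lra) (HEm j k jk).
    rewrite (HEj k Hk1 (leqnn k)). rewrite Hp1 in C2. intros; lra.
  have Hsigl : INR (sigma s l) <= c * nR.
    have e1 : sigma s l = (sigma s k + s l)%N := sigma_S s k.
    rewrite e1 plus_INR. have := @sigma_le_R s (mu * nR) k Hsmu.
    have h : INR (l + 2) = INR k.+1 + 2.
      rewrite plus_INR. have -> : INR 2 = 2 by simpl; lra. by [].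
    have := sl. move: Hmuc. rewrite h => Hm.
    have : (mu * (INR k.+1 + 2)) * nR <= c * nR by apply: Rmult_le_compat_r; lra.
    intros. lra.
  have Hsigi : forall i, (i < l)%N -> INR (sigma s i.+1) <= INR l.+1 * (2 * Rpower nR (E i.+1)).
    move=> i il.
    have := @sigma_le_R s (2 * Rpower nR (E i.+1)) i.+1.
    have h1 : forall j, (j <= i.+1)%N -> INR (s j) <= 2 * Rpower nR (E i.+1).
      move=> j ji. apply: (Rle_trans _ _ _ (Hsup j ltac:(rewrite /l; lia))).
      have := Rpow_mono nR (E j) (E i.+1) ltac:(lra) (HEm j i.+1 ji). intros; lra.
    move=> /(_ h1) h2. apply: (Rle_trans _ _ _ h2). apply: Rmult_le_compat_r.
      have := Hpos (E i.+1). intros; lra.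
    apply: INR_leq. rewrite /l. lia.
  have Hsmono : forall j, (1 <= j)%N -> (j < l)%N -> (s j <= s j.+1)%N.
    move=> j j1 jl. apply/leP; apply: INR_le.
    case: (ltngtP j k) => [jk|kj|->].
    - have := sj j j1 (ltnW jk). have := sj j.+1 ltac:(lia) jk.
      have := C5 j jk j1. have := Hge1 (e j) (Hej0 j j1 (ltnW jk)). intros; lra.
    - rewrite /l in jl. lia.
    - change (INR (s k) <= INR (s l)). have := Hsmu k (leqnn k). have := sl. intros; lra.
  have Hspos : forall j, (j <= l)%N -> (0 < s j)%N.
    move=> j jl. apply/ltP; apply: INR_lt. rewrite INR_0.
    case: (posnP j) => [->|j0]; first by rewrite s0 /=; lra.
    case: (leqP j k) => jk.
      have := sj j j0 jk. have := Hpos (e j). intros; lra.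
    have -> : j = l by rewrite /l; lia. have := sl. intros; lra.
  pose K := fun j => if j == 0%N then s 1%N else ((2 * s j.+1) %/ s j + 1)%N.
  have HsiS : forall i, (s i <= sigma s i)%N.
    case=> [|i]; first by rewrite sigma_0. by rewrite sigma_S leq_addl.
  have Hsig1 : forall i, (1 <= sigma s i)%N.
    move=> i. apply: leq_trans (sigma_mono s (leq0n i)). by rewrite sigma_0 s0.
  have Hstep : forall i, (i < l)%N -> forall (Tree Last : {set V}) b, u \in Tree -> Last \subset Tree ->
     (#|Tree| <= sigma s i)%N -> #|Last| = s i -> (forall v, v \in Last -> col v = b) ->
     forall U : {set V}, U \subset Last -> (K i * (#|Last| - #|U|) < s i.+1)%N ->
     (s i.+1 <= #|nbr G U :\: Tree|)%N.
    move=> i il Tree Last b uT LT cT cL Hcb U UL HK.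
    rewrite leqNgt; apply/negP => Hlt.
    have hN : (#|nbr G U| <= #|nbr G U :\: Tree| + #|Tree|)%N.
      rewrite cardsD. have := subset_leq_card (subsetIr (nbr G U) Tree). lia.
    have cU : (#|U| <= #|Last|)%N := subset_leq_card UL.
    case: (posnP i) => [i0|i0].
    - subst i. rewrite cL s0 in HK cU. rewrite sigma_0 s0 in cT.
      have KK : K 0%N = s 1%N by [].
      rewrite KK in HK.
      case: (posnP #|U|) => [U0|U0]; first by rewrite U0 muln1 ltnn in HK.
      have [x xU] : exists x, x \in U by apply/set0Pn; rewrite -card_gt0.
      have hx : (deg G x <= #|nbr G U|)%N.
        apply: subset_leq_card. apply/subsetP => w; rewrite !inE => Gxw.
        apply/existsP; exists x. by rewrite xU.
      have sD : (s 1%N + 1 <= D)%N.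
        apply/leP; apply: INR_le. rewrite plus_INR /=.
        have := sj 1%N (leqnn _) Hk1. have := Hge1 (e 1%N) (Hej0 1%N (leqnn _) Hk1).
        intros; lra.
      have := HD x. lia.
    - have Ki : K i = ((2 * s i.+1) %/ s i + 1)%N.
        rewrite /K. have -> : (i == 0%N) = false by lia. by [].
      have [KS KR] := @K_spec (s i) (s i.+1) (Hspos i (ltnW il)).
      rewrite -Ki in KS KR.
      rewrite cL in HK cU.
      have Kpos : (0 < K i)%N by rewrite Ki addn1.
      have U2 : (s i < 2 * #|U|)%N.
        have h1 : (K i * (2 * (s i - #|U|)) < K i * s i)%N.
          rewrite mulnCA. apply: (leq_trans _ KS). rewrite ltn_mul2l /=. lia.
        rewrite ltn_mul2l Kpos /= in h1. lia.
      have U0 : (0 < #|U|)%N by lia.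
      pose T := INR (sigma s i.+1).
      have hNT : INR #|nbr G U| <= T.
        apply: INR_leq. have := sigma_S s i. lia.
      have hUT : INR #|U| <= T.
        apply: INR_leq. apply: (leq_trans cU). apply: (leq_trans (HsiS i)). apply: sigma_mono. lia.
      have ex := @expand F rho C alpha beta V G col Gsym Hfree Hcol ltac:(lra) ltac:(lra) Hr Hz D U b T D0 HD (fun v vU => Hcb v (subsetP UL v vU)) U0 hNT hUT.
      have il' : (i <= k)%N by rewrite /l in il; lia.
      have Tc : T <= c * nR.
        apply: Rle_trans Hsigl. apply: INR_leq; apply: sigma_mono. rewrite /l; lia.
      have T1 : 1 <= T.
        rewrite /T. have := INR_leq (Hsig1 i.+1). simpl. intros; lra.
      have T2 : T <= INR l.+1 * (2 * Rpower nR (E i.+1)) := Hsigi i il.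
      clearbody T.
      have T0 : 0 < T by lra.
      have Ha1 : 0 <= alpha - 1 by lra.
      have hA : rho * Rpower T (alpha - 1) <= delta / 2 * Rpower nR (alpha - 1).
        have h := Rpow_base T (c * nR) (alpha - 1) Ha1 (conj T0 Tc).
        rewrite -Rpower_mult_distr in h; [|lra|lra]. rewrite Hcpow in h.
        apply (Rmult_le_compat_l rho) in h; [|lra].
        replace (rho * (delta / (2 * rho) * Rpower nR (alpha - 1))) with (delta / 2 * Rpower nR (alpha - 1)) in h by (field; lra).
        exact h.
      have hB : Rmax C 0 * Rpower T beta <= delta / 4 * Rpower nR (E i) * Rpower nR (alpha - 1).
        have h := Rpow_base T _ beta ltac:(lra) (conj T0 T2).
        rewrite (_ : INR l.+1 * (2 * Rpower nR (E i.+1)) = (2 * INR l.+1) * Rpower nR (E i.+1)) in h; last by ring.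
        have Hl1 : 0 < 2 * INR l.+1.
          rewrite S_INR. have := pos_INR l. intros; lra.
        rewrite -Rpower_mult_distr in h; [|lra|apply: Hpos]. rewrite Rpower_mult in h.
        have Ci := C4 i.-1 ltac:(lia). rewrite prednK in Ci; last by [].
        replace (E i + alpha - 1) with (E i + (alpha - 1)) in Ci by ring.
        rewrite Rpower_plus in Ci. rewrite (Rmult_comm (E i.+1) beta) in h.
        have hC : 0 <= Rmax C 0 by apply: Rmax_r.
        apply (Rmult_le_compat_l (Rmax C 0)) in h; [|exact hC].
        rewrite /A in Ci. rewrite -Rmult_assoc in h. lra.
      have hsi := sj i i0 il'. rewrite -(HEj i i0 il') in hsi.
      have hU2 : INR (s i) + 1 <= 2 * INR #|U|.
        have := INR_leq U2. rewrite mult_INR S_INR /=. intros; lra.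
      have u'0 := pos_INR #|U|.
      move: ex hUT hU2 u'0; move: (INR #|U|) => u' ex hUT hU2 u'0.
      move: ex HdR; move: (INR D) => Dr ex HdR.
      have Dr0 : 0 < Dr by lra.
      have e1 : rho * u' * Rpower T (alpha - 1) <= u' * (delta * Rpower nR (alpha - 1) / 2).
        rewrite (Rmult_comm rho) Rmult_assoc. apply: Rmult_le_compat_l => //. lra.
      have p0 : 0 < Rpower nR (E i) by apply: Hpos.
      have e2 : delta / 4 * Rpower nR (E i) * Rpower nR (alpha - 1) <= INR (s i) * Dr / 4.
        have : Rpower nR (E i) * (delta * Rpower nR (alpha - 1)) <= INR (s i) * Dr.
          apply: Rmult_le_compat; lra.
        intros; lra.
      have e3 : u' * (delta * Rpower nR (alpha - 1) / 2) <= u' * (Dr / 2) by apply: Rmult_le_compat_l; lra.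
      have e4 : (2 * u' - INR (s i)) * Dr <= 0 by lra.
      nra.
  have [Tree [Last [P [b [gd [cL cT]]]]]] := @build V G col u Hcol l s K s0 Hstep l (leqnn l).
  case: gd => [uT [LT [Hp [_ Hl]]]].
  exists Last, P. split; [|split].
  - rewrite cL. have := sl. intros; lra.
  - move=> v vL. have [pa [sz _]] := Hp v (subsetP LT v vL). split => //.
    rewrite /l in sz. lia.
  - move=> w wu. apply: Rle_trans (INR_leq (Hl w wu)) _.
    have HK : forall j, (1 <= j)%N -> (j < l)%N -> INR (K j) * INR (s j) <= 2 * INR (s j.+1) + INR (s j).
      move=> j j1 jl. have -> : K j = ((2 * s j.+1) %/ s j + 1)%N.
        rewrite /K. have -> : (j == 0%N) = false by lia. by [].
      exact: (proj2 (@K_spec (s j) (s j.+1) (Hspos j (ltnW jl)))).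
    have [_ Hb] := @Bbound K s l HK Hsmono l ltac:(rewrite /l; lia) (leqnn l).
    have hs1 := sj 1%N (leqnn _) Hk1.
    have hsl : INR (s l) <= 2 * nR.
      have := sl. have : mu * nR <= 1 * nR by apply: Rmult_le_compat_r; lra. intros; lra.
    have lnp : 0 < ln nR by rewrite -ln_1; apply: ln_increasing; lra.
    have p4 : 0 < 4 ^ l by apply: pow_lt; lra.
    have B0 := pos_INR (Bseq K l).
    have h1 : INR (Bseq K l) * (2 * 4 ^ l * ln nR) <= INR (Bseq K l) * INR (s 1%N).
      apply: Rmult_le_compat_l => //. lra.
    have h2 : 4 ^ l * INR (s l) <= 4 ^ l * (2 * nR) by apply: Rmult_le_compat_l; lra.
    have h3 : (2 * 4 ^ l) * (INR (Bseq K l) * ln nR) <= (2 * 4 ^ l) * nR by lra.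
    have h4 : INR (Bseq K l) * ln nR <= nR.
      apply: (Rmult_le_reg_l (2 * 4 ^ l)) => //. lra.
    apply: (Rmult_le_reg_r (ln nR)) => //. rewrite /Rdiv Rmult_assoc Rinv_l; lra.
Qed.
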